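(* For each $n\ge 0$ there is a bijection $\phi$ from the set of Dyck $n$-paths to itself such that: (1) for every Dyck path $P$, the number of valleys $DU$ in $P$ equals the number of occurrences of $DXD$ in $\phi(P)$; (2) $\phi$ restricts to a bijection from the Dyck $n$-paths whose terminal descent has even length (including the empty path) onto the hill-free Dyck $n$-paths; (3) $\phi$ restricts to a bijection from the nonempty Dyck $n$-paths all of whose descents to ground level have odd length onto the Dyck $n$-paths that start $UD$.
   Context: A Dyck $n$-path is a path from $(0,0)$ to $(2n,0)$ with $n$ upsteps $U=(1,1)$ and $n$ downsteps $D=(1,-1)$ never going below the $x$-axis, written as a word in $U,D$. A valley is an occurrence of $DU$; a $DXD$ is an occurrence of $DUD$ or $DDD$ as consecutive steps. A descent is a maximal run of consecutive $D$s; the terminal descent is the last descent (length $0$ for the empty path). A descent to ground level is a descent ending on the $x$-axis. A hill is a peak $UD$ whose top vertex is at height $1$; a path is hill-free if it has no hills. *)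

(* Defs.v *)
From mathcomp Require Import all_boot.
Set Implicit Arguments. Unset Strict Implicit. Unset Printing Implicit Defensive.

(* A lattice path is a word in U, D encoded as seq bool: true = U, false = D. *)

Fixpoint dyck_from (h : nat) (s : seq bool) : bool :=
  match s with
  | [::] => h == 0
  | true :: t => dyck_from h.+1 t
  | false :: t => (0 < h) && dyck_from h.-1 t
  end.

Definition is_dyck (n : nat) (s : seq bool) : bool :=
  (size s == 2 * n) && dyck_from 0 s.

Fixpoint count_valleys (s : seq bool) : nat :=
  match s with
  | [::] => 0
  | a :: t =>
      (match t with b :: _ => (~~ a && b : nat) | [::] => 0 end) + count_valleys t
  end.

Fixpoint count_DXD (s : seq bool) : nat :=
  match s with
  | [::] => 0
  | a :: t =>
      (match t with _ :: c :: _ => (~~ a && ~~ c : nat) | _ => 0 end) + count_DXD t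
  end.

Definition terminal_descent (s : seq bool) : nat := find id (rev s).

Fixpoint has_hill (h : nat) (s : seq bool) : bool :=
  match s with
  | [::] => false
  | true :: t =>
      ((h == 0) && (match t with false :: _ => true | _ => false end))
      || has_hill h.+1 t
  | false :: t => has_hill h.-1 t
  end.

Definition hill_free (s : seq bool) : bool := ~~ has_hill 0 s.

(* [ground_descents h r s]: lengths of the descents (maximal runs of D) ending on
   the x-axis; h = current height, r = length of the current run of D's. *)
Fixpoint ground_descents (h r : nat) (s : seq bool) : seq nat :=
  match s with
  | [::] => if (0 < r) && (h == 0) then [:: r] else [::]
  | true :: t => (if (0 < r) && (h == 0) then [:: r] else [::])
                   ++ ground_descents h.+1 0 t
  | false :: t => ground_descents h.-1 r.+1 t
  end.

Definition all_ground_descents_odd (s : seq bool) : bool :=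
  all odd (ground_descents 0 0 s).

Definition starts_UD (s : seq bool) : bool := take 2 s == [:: true; false].

Example ex1 : count_valleys [:: true; false; true; false] = 1. Proof. by []. Qed.
Example ex2 : count_DXD [:: true; true; false; false; false; false] = 2. Proof. by []. Qed.
Example ex3 : count_DXD [:: true; true; false; true; false; false] = 1. Proof. by []. Qed.
Example ex4 : terminal_descent [:: true; true; false; false] = 2. Proof. by []. Qed.
Example ex5 : hill_free [:: true; true; false; false] && ~~ hill_free [:: true; true; false; false; true; false]. Proof. by []. Qed.
Example ex6 : ground_descents 0 0 [:: true; true; false; true; false; false; true; false] = [:: 2; 1]. Proof. by []. Qed.

(* Main.v *)
Require Import Defs.
From mathcomp Require Import all_boot zify.
From Stdlib Require Import ClassicalEpsilon.
Set Implicit Arguments. Unset Strict Implicit. Unset Printing Implicit Defensive.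


Fixpoint ok (h : nat) (s : seq bool) : bool :=
  match s with
  | [::] => true
  | true :: t => ok h.+1 t
  | false :: t => (0 < h) && ok h.-1 t
  end.
Fixpoint endh (h : nat) (s : seq bool) : nat :=
  match s with
  | [::] => h
  | true :: t => endh h.+1 t
  | false :: t => endh h.-1 t
  end.

Lemma dyckE h s : dyck_from h s = ok h s && (endh h s == 0).
Proof. by elim: s h => [|[] s IH] h //=; rewrite IH // andbA. Qed.

Lemma ok_cat h s t : ok h (s ++ t) = ok h s && ok (endh h s) t.
Proof. by elim: s h => [|[] s IH] h //=; rewrite IH // andbA. Qed.

Lemma endh_cat h s t : endh h (s ++ t) = endh (endh h s) t.
Proof. by elim: s h => [|[] s IH] h //=. Qed.

Lemma ok_shift s h k : ok h s -> ok (h + k) s /\ endh (h + k) s = endh h s + k.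
Proof.
elim: s h => [|[] s IH] h //=.
- by move=> /IH; rewrite -addSn.
- by case: h => [|h] //= /IH.
Qed.

Lemma dyck_cat s t : dyck_from 0 s -> dyck_from 0 t -> dyck_from 0 (s ++ t).
Proof.
rewrite !dyckE ok_cat endh_cat => /andP[-> /eqP ->] /andP[-> /eqP ->] //.
Qed.

Lemma dyck_prime s t : dyck_from 0 s -> dyck_from 0 t ->
  dyck_from 0 (true :: s ++ false :: t).
Proof.
rewrite !dyckE /= ok_cat endh_cat => /andP[o /eqP e] /andP[o2 /eqP e2].
have [o1 e1] := ok_shift 1 o. rewrite add0n in o1 e1.
by rewrite o1 e1 e /= o2 e2.
Qed.

Lemma dyck_head x s : dyck_from 0 (x :: s) -> x = true.
Proof. by case: x. Qed.

Lemma dyck_last s : dyck_from 0 s -> s = [::] \/ exists s0, s = rcons s0 false.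
Proof.
case/lastP: s => [|s x]; first by left.
case: x; last by right; exists s.
rewrite dyckE -cats1 ok_cat endh_cat /=.
by move=> /andP[_ /eqP].
Qed.

Lemma first_ret k h t : dyck_from (h + k).+1 t ->
  exists A B, [/\ t = A ++ false :: B, dyck_from k A & dyck_from h B].
Proof.
elim: t k => [|[] t IH] k //=.
- rewrite -addnS => /(IH k.+1) [A [B [-> dA dB]]]. by exists (true :: A), B.
- case: k => [|k].
  + rewrite addn0 => d. by exists [::], t.
  + rewrite addnS /= => /(IH k) [A [B [-> dA dB]]]. by exists (false :: A), B.
Qed.

Lemma dyck_split s : dyck_from 0 s -> s = [::] \/
  exists A B, [/\ s = true :: A ++ false :: B, dyck_from 0 A & dyck_from 0 B].
Proof.
case: s => [|[] s] //=; first by left.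
move=> d; right. have [A [B [-> dA dB]]] := first_ret (h:=0) (k:=0) d.
by exists A, B.
Qed.

Inductive bt : Type := Lf | Nd of bt & bt.

Definition nl (t : bt) : bool := if t is Lf then false else true.
Fixpoint nodes t := if t is Nd e c then (nodes e + nodes c).+1 else 0.
Fixpoint spine t := if t is Nd _ c then (spine c).+1 else 0.
Fixpoint internal t :=
  if t is Nd e c then nl e + internal e + internal c else 0.
Fixpoint allodd t := if t is Nd e c then allodd e && ~~ odd (spine c) else true.

Fixpoint penc t : seq bool :=
  if t is Nd e c then penc e ++ true :: rcons (penc c) false else [::].

Fixpoint enc (t : bt) : seq bool :=
  match t with
  | Lf => [::]
  | Nd e c =>
      let fe := enc e in
      (fix enc2 (x : bt) : seq bool :=
         if odd (spine x) then
           match x with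
           | Nd e' c' => true :: enc2 e' ++ false :: enc c'
           | Lf => [::]
           end
         else fe ++ true :: false :: enc x) c
  end.

Lemma encE e c : enc (Nd e c) =
  if odd (spine c) then
    (if c is Nd e' c' then true :: enc (Nd e e') ++ false :: enc c' else [::])
  else enc e ++ true :: false :: enc c.
Proof. by case: c. Qed.

Lemma penc_dyck t : dyck_from 0 (penc t).
Proof.
elim: t => [|e IHe c IHc] //=.
apply: dyck_cat => //. rewrite -cats1.
exact: (dyck_prime IHc (isT : dyck_from 0 [::])).
Qed.

Lemma size_penc t : size (penc t) = 2 * nodes t.
Proof.
elim: t => [|e IHe c IHc] //=.
rewrite size_cat /= size_rcons IHe IHc. rewrite !mulnS !mulnDr. 
by rewrite !addnS !addSn.
Qed.

Lemma penc_nil t : (penc t == [::]) = ~~ nl t.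
Proof. by case: t => //= e c; case: (penc e). Qed.

Lemma cv_cat s t : count_valleys (s ++ t) =
  count_valleys s + count_valleys t + (~~ last true s && head false t).
Proof.
elim: s => [|a s IH]; first by rewrite /= add0n addn0.
case: s IH => [|b s] IH.
  by case: t {IH} => [|b t] /=; lia.
have E : count_valleys (a :: (b :: s) ++ t) = (~~a && b) + count_valleys ((b::s) ++ t) by [].
have E2 : count_valleys (a :: b :: s) = (~~a && b) + count_valleys (b :: s) by [].
rewrite E IH E2 /=. by rewrite !addnA.
Qed.

Lemma cv_U X : count_valleys (true :: X) = count_valleys X.
Proof. by case: X. Qed.

Lemma last_penc t : last true (penc t) = ~~ nl t.
Proof. case: t => //= e c. by rewrite last_cat /= last_rcons. Qed.

Lemma penc_val t : count_valleys (penc t) = internal t.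
Proof.
elim: t => [|e IHe c IHc] //=.
rewrite cv_cat IHe cv_U -cats1 cv_cat IHc /= !last_penc andbF negbK. lia.
Qed.

Lemma td_catU s t : terminal_descent (s ++ true :: t) = terminal_descent t.
Proof.
rewrite /terminal_descent rev_cat rev_cons -cats1 -catA find_cat /=.
case: ifP => // hn. by rewrite addn0 hasNfind // hn.
Qed.

Lemma td_rconsD t : terminal_descent (rcons t false) = (terminal_descent t).+1.
Proof. by rewrite /terminal_descent rev_rcons. Qed.

Lemma penc_td t : terminal_descent (penc t) = spine t.
Proof. elim: t => [|e IHe c IHc] //=. by rewrite td_catU td_rconsD IHc. Qed.

Lemma gd_catU h r s t : ground_descents h r (s ++ true :: t) =
  ground_descents h r s ++ ground_descents (endh h s).+1 0 t.
Proof. elim: s h r => [|[] s IH] h r //=; by rewrite IH ?catA. Qed.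

Definition fr r (C : seq bool) := foldl (fun r (x : bool) => if x then 0 else r.+1) r C.

Lemma gd_end C k r : dyck_from k C ->
  ground_descents k.+1 r (rcons C false) = [:: (fr r C).+1].
Proof.
elim: C k r => [|[] C IH] k r /=.
- by move=> /eqP ->.
- by rewrite andbF /= => /IH ->.
- by case: k => [|k] //= /IH ->.
Qed.

Lemma fr_td C : fr 0 C = terminal_descent C.
Proof.
elim/last_ind: C => [|C x IH] //.
rewrite /fr foldl_rcons -/(fr 0 C) IH /terminal_descent rev_rcons /=.
by case: x.
Qed.

Lemma penc_gd t : all_ground_descents_odd (penc t) = allodd t.
Proof.
elim: t => [|e IHe c IHc] //=.
rewrite /all_ground_descents_odd gd_catU all_cat -/(all_ground_descents_odd _) IHe.
have := penc_dyck e; rewrite dyckE => /andP[_ /eqP ->].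
by rewrite gd_end ?penc_dyck // fr_td penc_td /= andbT.
Qed.

Lemma cat_eq_cases (A B C D : seq bool) : A ++ B = C ++ D ->
  (exists W, C = A ++ W /\ B = W ++ D) \/ (exists W, A = C ++ W /\ D = W ++ B).
Proof.
elim: A C => [|a A IH] C /=; first by move=> ->; left; exists C.
case: C => [|c C] /=; first by move=> <-; right; exists (a :: A).
case=> -> /IH [[W [-> ->]]|[W [-> ->]]]; [left|right]; by exists W.
Qed.

Lemma noret E W X : dyck_from 0 E -> dyck_from 0 (E ++ true :: W) ->
  dyck_from 0 (W ++ X) -> False.
Proof.
rewrite !dyckE ok_cat endh_cat => /andP[_ /eqP ->] /andP[_ /eqP] /=.
move=> e /andP[o _]. move: o; rewrite ok_cat => /andP[o _].
have [_ e1] := ok_shift 1 o. by rewrite add0n in e1; rewrite e1 addn1 in e.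
Qed.

Lemma lr_uniq E E' C C' : dyck_from 0 E -> dyck_from 0 E' -> dyck_from 0 C ->
  dyck_from 0 C' -> E ++ true :: C = E' ++ true :: C' -> E = E' /\ C = C'.
Proof.
move=> dE dE' dC dC' /cat_eq_cases [[W [eE e]]|[W [eE e]]].
- case: W eE e => [|w W] eE; first by rewrite cats0 in eE; case=> ->.
  case=> ew eC; subst. by case: (noret dE dE' dC).
- case: W eE e => [|w W] eE; first by rewrite cats0 in eE; case=> ->.
  case=> ew eC; subst. by case: (noret dE' dE dC').
Qed.

Lemma penc_inj t t' : penc t = penc t' -> t = t'.
Proof.
elim: t t' => [|e IHe c IHc] [|e' c'] //=; try by case: (penc _).
rewrite -!rcons_cons -!rcons_cat => /(@rcons_injl _ false) /lr_uniq.
case; rewrite ?penc_dyck // => /IHe -> /IHc -> //.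
Qed.

Lemma penc_surj P : dyck_from 0 P -> exists t, penc t = P.
Proof.
have [m le] := ubnP (size P); elim: m P le => // m IH P le d.
case: (dyck_split d) => [->|[A [B [EP dA dB]]]]; first by exists Lf.
have [a Ea] : exists a, penc a = A.
  apply: IH dA. move: le; rewrite EP /= size_cat /=; lia.
have [eB|[e [c EB]]] : B = [::] \/ exists e c, penc (Nd e c) = B.
- case: B EP dB => [|b B] EP dB; first by left.
  right. have [[|e c] Et] : exists t, penc t = b :: B.
    apply: IH dB. move: le; rewrite EP /= size_cat /=; lia.
  + done.
  + by exists e, c.
- exists (Nd Lf a). by rewrite EP eB /= Ea cats1.
- have [e' Ee'] : exists e', penc e' = true :: A ++ false :: penc e.
    apply: IH; last by apply: dyck_prime; rewrite ?penc_dyck.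
    move: le; rewrite EP -EB /= !size_cat /= size_cat /= size_rcons; lia.
  exists (Nd e' c). by rewrite EP -EB /= Ee' /= -catA.
Qed.

Lemma enc_ds t : dyck_from 0 (enc t) /\ size (enc t) = 2 * nodes t.
Proof.
have [m le] := ubnP (nodes t); elim: m t le => // m IH [|e c] le; first by [].
rewrite encE; case: ifP => hc.
- case: c hc le => [|e' c'] //= hc le.
  have [d1 s1] := IH (Nd e e') ltac:(move: le => /=; lia).
  have [d2 s2] := IH c' ltac:(move: le => /=; lia).
  split; first exact: dyck_prime.
  rewrite /= size_cat /= s1 s2 /=. lia.
- have [d1 s1] := IH e ltac:(move: le => /=; lia).
  have [d2 s2] := IH c ltac:(move: le => /=; lia).
  split; first by apply: dyck_cat => //; exact: (dyck_prime (isT : dyck_from 0 [::]) d2).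
  rewrite size_cat /= s1 s2 /=. lia.
Qed.

Lemma enc_dyck t : dyck_from 0 (enc t). Proof. by case: (enc_ds t). Qed.
Lemma enc_size t : size (enc t) = 2 * nodes t. Proof. by case: (enc_ds t). Qed.

Lemma encN_cons e c : exists Y, enc (Nd e c) = true :: Y.
Proof.
have := enc_dyck (Nd e c); have := enc_size (Nd e c).
case: (enc _) => [|x Y] //= _ /dyck_head ->. by exists Y.
Qed.

Lemma enc_shape t : ~~ odd (spine t) ->
  enc t = [::] \/ exists Y, enc t = [:: true, true & Y].
Proof.
case: t => [|a b]; first by left.
move=> hb; have hb' : odd (spine b) by move: hb; rewrite /= negbK.
rewrite encE hb'. clear hb. case: b hb' => [|a' b'] // _.
have [Y ->] := encN_cons a a'. right. by eexists.
Qed.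

Lemma enc_last2 e c : exists X0, enc (Nd e c) = X0 ++ [:: ~~ nl c; false].
Proof.
have [m le] := ubnP (nodes (Nd e c)); elim: m e c le => // m IH e c le.
rewrite encE; case: ifP => hc.
- case: c hc le => [|e' c'] // hc le.
  case: c' hc le => [|a b] hc le.
  + have [X0 ->] := IH e e' ltac:(move: le => /=; lia).
    exists (true :: X0 ++ [:: ~~ nl e']). by rewrite /= -!catA.
  + have [X0 ->] := IH a b ltac:(move: le => /=; lia).
    have -> : nl b by case: (b) hc.
    exists (true :: enc (Nd e e') ++ false :: X0). by rewrite /= -!catA.
- case: c hc le => [|a b] hc le.
  + by exists (enc e).
  + have [X0 ->] := IH a b ltac:(move: le => /=; lia).
    have -> : nl b by case: (b) hc.
    exists (enc e ++ [:: true, false & X0]). by rewrite -!catA.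
Qed.

Lemma last_dyck s : dyck_from 0 s -> last false s = false.
Proof. by case/dyck_last => [->|[s0 ->]] //; rewrite last_rcons. Qed.

Lemma hh_cons h' u : has_hill h' (true :: u) =
  ((h' == 0) && (if u is false :: _ then true else false)) || has_hill h'.+1 u.
Proof. by []. Qed.

Lemma hh_cat h s t : last false s = false ->
  has_hill h (s ++ t) = has_hill h s || has_hill (endh h s) t.
Proof.
elim: s h => [|[] s IH] h //.
- case: s IH => [|x s] IH // Hl. rewrite cat_cons !hh_cons IH // orbA. by case: (x).
- move=> Hl. by rewrite /= IH.
Qed.

Lemma hh_ok h s : ok h s -> has_hill h.+1 s = false.
Proof.
elim: s h => [|[] s IH] h //=.
- by move=> /IH ->.
- by case: h => [|h] //= /IH.
Qed.

Lemma cD_U X : count_DXD (true :: X) = count_DXD X.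
Proof. by case: X => [|? [|? ?]]. Qed.

Lemma cD_split X0 a b t : count_DXD (X0 ++ [:: a, b & t]) =
  count_DXD (X0 ++ [:: a; b]) + count_DXD [:: a, b & t].
Proof.
elim: X0 => [|x X0 IH]; first by [].
have E1 : count_DXD (x :: (X0 ++ [:: a, b & t])) =
  (match X0 ++ [:: a, b & t] with _ :: c :: _ => (~~x && ~~c : nat) | _ => 0 end)
  + count_DXD (X0 ++ [:: a, b & t]) by [].
have E2 : count_DXD (x :: (X0 ++ [:: a; b])) =
  (match X0 ++ [:: a; b] with _ :: c :: _ => (~~x && ~~c : nat) | _ => 0 end)
  + count_DXD (X0 ++ [:: a; b]) by [].
rewrite !cat_cons E1 E2 IH addnA; congr (_ + _ + _).
by case: X0 {IH E1 E2} => [|y [|z X]].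
Qed.

Lemma cD_ff Y : (Y = [::] \/ exists Y', Y = [:: true, true & Y']) ->
  count_DXD [:: false, false & Y] = count_DXD Y /\ count_DXD (false :: Y) = count_DXD Y.
Proof. by case=> [->|[Y' ->]]. Qed.

Lemma cD_x x Y : count_DXD [:: x, false, false & Y] = ~~ x + count_DXD [:: false, false & Y].
Proof. by case: Y => [|? [|? ?]] /=; rewrite andbT. Qed.

Lemma cD_even x Y : count_DXD [:: x, false, true, false & Y] = 1 + count_DXD (false :: Y).
Proof. by case: Y => [|? [|? ?]] /=; rewrite ?andbF. Qed.

Lemma enc_stats t : [/\ has_hill 0 (enc t) = odd (spine t),
  count_DXD (enc t) = internal t & starts_UD (enc t) = nl t && allodd t].
Proof.
have [m le] := ubnP (nodes t); elim: m t le => // m IH [|e c] le; first by [].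
rewrite encE; case: ifP => hc.
- case: c hc le => [|e' c'] // hc le.
  have hc' : odd (spine c') = false by move: hc => /= /negPf.
  have [h1 d1 s1] := IH (Nd e e') ltac:(move: le => /=; lia).
  have [h2 d2 s2] := IH c' ltac:(move: le => /=; lia).
  have [X1 EX] := encN_cons e e'.
  have [X0 EX0] := enc_last2 e e'.
  have dX := enc_dyck (Nd e e').
  have sh := enc_shape (t:=c') (negbT hc').
  split.
  + rewrite hh_cons.
    have -> : (if enc (Nd e e') ++ false :: enc c' is false :: _ then true else false) = false.
      by rewrite EX.
    rewrite andbF orFb hh_cat; last by apply: last_dyck.
    move: (dX); rewrite dyckE => /andP[o /eqP e0].
    have [_ e1] := ok_shift 1 o. rewrite add0n e0 in e1. rewrite e1 /= h2 hc'.
    by rewrite hh_ok.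
  + rewrite cD_U EX0 -catA cD_split -EX0 d1 cD_x.
    have [-> _] := cD_ff sh. rewrite d2 /= negbK. lia.
  + by rewrite /starts_UD EX /= hc' andbF.
- have [h1 d1 s1] := IH e ltac:(move: le => /=; lia).
  have [h2 d2 s2] := IH c ltac:(move: le => /=; lia).
  have sh := enc_shape (t:=c) (negbT hc).
  split.
  + rewrite hh_cat; last by apply/last_dyck/enc_dyck. have ee : endh 0 (enc e) = 0 by move: (enc_dyck e); rewrite dyckE => /andP[_ /eqP].
    by rewrite /= hc ee /= orbT.
  + case: e h1 d1 s1 le => [|a b] h1 d1 s1 le.
      have -> : enc Lf = [::] by [].
      rewrite cat0s cD_U. have [_ ->] := cD_ff sh. rewrite d2 /=. lia.
    have [X0 EX0] := enc_last2 a b.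
    rewrite EX0 -catA cD_split -EX0 d1 cD_even.
    have [_ ->] := cD_ff sh. rewrite d2 /=. lia.
  + case: e h1 d1 s1 le => [|a b] h1 d1 s1 le.
      by rewrite /starts_UD /= take0 hc.
    rewrite /starts_UD takel_cat; last by rewrite enc_size /=; lia.
    by rewrite -/(starts_UD _) s1 /= hc andbT.
Qed.

Lemma endh1 A : dyck_from 0 A -> endh 1 A = 1.
Proof.
rewrite dyckE => /andP[o /eqP e0]. have [_ e1] := ok_shift 1 o.
by rewrite add0n e0 in e1.
Qed.

Lemma hh_prime A B : dyck_from 0 A -> dyck_from 0 B ->
  has_hill 0 (true :: A ++ false :: B) = (A == [::]) || has_hill 0 B.
Proof.
move=> dA dB. rewrite hh_cons hh_cat ?last_dyck // endh1 //.
have -> : has_hill 1 A = false.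
  by apply: hh_ok; move: dA; rewrite dyckE => /andP[].
case: A dA => [|x A] //= /dyck_head ->. done.
Qed.

Lemma last_hill Q : dyck_from 0 Q -> has_hill 0 Q ->
  exists X Y, [/\ Q = X ++ [:: true, false & Y], dyck_from 0 X, dyck_from 0 Y
                & ~~ has_hill 0 Y].
Proof.
have [m le] := ubnP (size Q); elim: m Q le => // m IH Q le d.
case: (dyck_split d) => [->|[A [B [EQ dA dB]]]] //.
rewrite EQ hh_prime //. case hB: (has_hill 0 B).
- have [X [Y [EB dX dY hY]]] := IH B ltac:(move: le; rewrite EQ /= size_cat /=; lia) dB hB.
  move=> _. exists (true :: A ++ false :: X), Y. split => //.
  + by rewrite EB /= -catA.
  + exact: dyck_prime.
- rewrite orbF => /eqP eA. exists [::], B. split => //. by rewrite eA. by rewrite hB.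
Qed.

Lemma enc_surj Q : dyck_from 0 Q -> exists t, enc t = Q.
Proof.
have [m le] := ubnP (size Q); elim: m Q le => // m IH Q le d.
case hQ: (has_hill 0 Q).
- have [X [Y [EQ dX dY hY]]] := last_hill d hQ.
  have [e Ee] := IH X ltac:(move: le; rewrite EQ size_cat /=; lia) dX.
  have [c Ec] := IH Y ltac:(move: le; rewrite EQ size_cat /=; lia) dY.
  have [hc _ _] := enc_stats c. rewrite Ec (negbTE hY) in hc.
  exists (Nd e c). by rewrite encE -hc Ee Ec EQ.
- case: (dyck_split d) => [->|[A [B [EQ dA dB]]]]; first by exists Lf.
  move: hQ; rewrite EQ hh_prime // => /norP[nA hB].
  have [[|e e'] Es] := IH A ltac:(move: le; rewrite EQ /= size_cat /=; lia) dA.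
    by rewrite -Es in nA.
  have [c Ec] := IH B ltac:(move: le; rewrite EQ /= size_cat /=; lia) dB.
  have [hc _ _] := enc_stats c. rewrite Ec (negbTE hB) in hc.
  exists (Nd e (Nd e' c)). rewrite encE.
  have -> : odd (spine (Nd e' c)) by rewrite /= -hc.
  by rewrite Es Ec.
Qed.

Lemma surj_inj n (f : seq bool -> seq bool) :
  (forall P, is_dyck n P -> is_dyck n (f P)) ->
  (forall Q, is_dyck n Q -> exists P, is_dyck n P /\ f P = Q) ->
  forall P Q, is_dyck n P -> is_dyck n Q -> f P = f Q -> P = Q.
Proof.
move=> fD fS.
pose L := [seq s <- [seq val t | t <- enum {: (2 * n).-tuple bool}] | is_dyck n s].
have memL s : (s \in L) = is_dyck n s.
  rewrite mem_filter andb_idr // => /andP[/eqP sz _].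
  have -> : s = val (Tuple (introT eqP sz)) by [].
  by apply: map_f; rewrite mem_enum.
have uL : uniq L by rewrite filter_uniq // map_inj_uniq ?enum_uniq //; apply: val_inj.
have sub : {subset L <= map f L}.
  move=> Q; rewrite memL => /fS [P [dP <-]]. by apply: map_f; rewrite memL.
have uM : uniq (map f L) by apply: (leq_size_uniq uL sub); rewrite size_map.
move=> P Q dP dQ ef. apply/eqP; apply/negPn/negP => nPQ.
have PL : P \in L by rewrite memL.
have := perm_uniq (perm_map f (perm_to_rem PL)); rewrite uM /= => /esym /andP[nin _].
have : Q \in rem P L by rewrite mem_rem_uniq // inE memL dQ andbT eq_sym.
by move=> /(map_f f); rewrite -ef (negbTE nin).
Qed.

Definition dec (P : seq bool) : bt := epsilon (inhabits Lf) (fun t => penc t = P).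

Lemma dec_spec P : dyck_from 0 P -> penc (dec P) = P.
Proof. move=> d. exact: (epsilon_spec (inhabits Lf) _ (penc_surj d)). Qed.

Lemma dec_penc t : dec (penc t) = t.
Proof. apply: penc_inj. by rewrite dec_spec ?penc_dyck. Qed.

Theorem mainTheorem6 (n : nat) :
  exists phi : seq bool -> seq bool,
  [/\ (* phi is a bijection from the set of Dyck n-paths to itself *)
      [/\ forall P, is_dyck n P -> is_dyck n (phi P),
          forall P Q, is_dyck n P -> is_dyck n Q -> phi P = phi Q -> P = Q
        & forall Q, is_dyck n Q -> exists2 P, is_dyck n P & phi P = Q],
      (* (1) *)
      forall P, is_dyck n P -> count_valleys P = count_DXD (phi P),
      (* (2) restriction: even terminal descent  -->  onto hill-free *)
      (forall P, is_dyck n P -> ~~ odd (terminal_descent P) -> hill_free (phi P))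
        /\ (forall Q, is_dyck n Q -> hill_free Q ->
              exists2 P, is_dyck n P /\ ~~ odd (terminal_descent P) & phi P = Q)
    & (* (3) restriction: nonempty, all ground descents odd  -->  onto starting UD *)
      (forall P, is_dyck n P -> P != [::] -> all_ground_descents_odd P ->
           starts_UD (phi P))
        /\ (forall Q, is_dyck n Q -> starts_UD Q ->
              exists2 P, [/\ is_dyck n P, P != [::] & all_ground_descents_odd P]
                       & phi P = Q)].
Proof.
pose phi P := enc (dec P).
have decD P : is_dyck n P -> penc (dec P) = P by move=> /andP[_ /dec_spec].
have phiD P : is_dyck n P -> is_dyck n (phi P).
  move=> dP; rewrite /is_dyck enc_dyck andbT enc_size.
  move: (dP) => /andP[/eqP sz _]. by rewrite -(decD P dP) size_penc in sz; rewrite sz.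
have phiS Q : is_dyck n Q -> exists P, is_dyck n P /\ phi P = Q.
  move=> /andP[/eqP sz dQ]. have [t Et] := enc_surj dQ.
  exists (penc t); split; last by rewrite /phi dec_penc.
  by rewrite /is_dyck penc_dyck size_penc -enc_size Et sz eqxx.
have phiI := surj_inj phiD phiS.
have phiS2 Q : is_dyck n Q -> exists P, [/\ is_dyck n P, phi P = Q & penc (dec P) = P].
  move=> dQ; have [P [dP eP]] := phiS Q dQ. by exists P; split => //; apply: decD.
exists phi; split.
- split => // Q /phiS [P [dP eP]]. by exists P.
- move=> P dP. rewrite -(decD P dP) penc_val /phi dec_penc.
  by have [_ -> _] := enc_stats (dec P).
- split.
  + move=> P dP. rewrite -(decD P dP) penc_td /phi dec_penc /hill_free.
    case: (enc_stats (dec P)) => h _ _. by rewrite h.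
  + move=> Q dQ hQ. have [P [dP eP eD]] := phiS2 Q dQ.
    exists P => //; split => //. have [h _ _] := enc_stats (dec P).
    move: hQ; rewrite -eP /phi /hill_free h => hQ. by rewrite -eD penc_td.
- split.
  + move=> P dP nP. rewrite -(decD P dP) penc_gd /phi dec_penc.
    have [_ _ ->] := enc_stats (dec P). move=> ->; rewrite andbT.
    move: nP; rewrite -(decD P dP) -(negbK (nl _)) -penc_nil. by rewrite dec_penc.
  + move=> Q dQ sQ. have [P [dP eP eD]] := phiS2 Q dQ.
    move: sQ; rewrite -eP /phi. have [_ _ ->] := enc_stats (dec P).
    move=> /andP[nl1 ao]. exists P => //; split => //.
    * by rewrite -eD penc_nil nl1.
    * by rewrite -eD penc_gd.
Qed.
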